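(* Let $n\ge2$ and $0\le r_l\le r_u<1$. For all $x,y\in\mathbb{B}^n$ with $r_l\le|x|\le|y|\le r_u$, $$\frac{1+r_l}{\sqrt{5+2r_l+r_l^2}}\,\mathrm{th}\frac{\rho_{\mathbb{B}^n}(x,y)}{2}\le w_{\mathbb{B}^n}(x,y)\le s_{\mathbb{B}^n}(x,y)\le\frac{1+r_u^2}{2\sqrt{1-2r_u+2r_u^2}}\,\mathrm{th}\frac{\rho_{\mathbb{B}^n}(x,y)}{2}.$$
   Context: $\mathbb{B}^n$ is the unit ball of $\mathbb{R}^n$; $S^{n-1}(x,r)$ is the Euclidean sphere of center $x$ and radius $r$. For a domain $G\subsetneq\mathbb{R}^n$ and $x\in G$, $d_G(x)=\inf\{|x-z|:z\in\partial G\}$. The hyperbolic metric of the unit ball satisfies $\mathrm{th}\frac{\rho_{\mathbb{B}^n}(x,y)}{2}=\frac{|x-y|}{\sqrt{|x-y|^2+(1-|x|^2)(1-|y|^2)}}$. The triangular ratio metric is $s_G(x,y)=\frac{|x-y|}{\inf_{z\in\partial G}(|x-z|+|z-y|)}$. For a convex domain $G$, the $w$-quasi-metric is $w_G(x,y)=\frac{|x-y|}{\min\{\inf_{\tilde y\in\tilde Y}|x-\tilde y|,\ \inf_{\tilde x\in\tilde X}|y-\tilde x|\}}$, where $\tilde X=\{\tilde x\in S^{n-1}(x,2d_G(x)):(x+\tilde x)/2\in\partial G\}$ and $\tilde Y=\{\tilde y\in S^{n-1}(y,2d_G(y)):(y+\tilde y)/2\in\partial G\}$. *)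

(* Defs.v *)
From mathcomp Require Import all_boot all_order all_algebra.
From mathcomp Require Import boolp classical_sets reals.
Set Implicit Arguments. Unset Strict Implicit. Unset Printing Implicit Defensive.
Import Order.TTheory GRing.Theory Num.Theory.
Local Open Scope ring_scope.
Local Open Scope classical_set_scope.

Section Defs.
Variables (R : realType) (n : nat).
Implicit Types (x y z : 'rV[R]_n) (B : set 'rV[R]_n).

Definition enorm x : R := Num.sqrt (\sum_(i < n) x ord0 i ^+ 2).

Definition esphere (c : 'rV[R]_n) (r : R) : set 'rV[R]_n :=
  [set z | enorm (z - c) = r].

Definition unit_ball : set 'rV[R]_n := [set x | enorm x < 1].
Definition unit_sphere : set 'rV[R]_n := esphere 0 1.

(* d_G(x) = inf_{z in dG} |x - z|, with B = dG the boundary of G *)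
Definition dist_bd B x : R := inf [set enorm (x - z) | z in B].

Definition s_metric B x y : R :=
  enorm (x - y) / inf [set enorm (x - z) + enorm (z - y) | z in B].

Definition refl_set B x : set 'rV[R]_n :=
  [set xt | esphere x (2 * dist_bd B x) xt /\ B (2^-1 *: (x + xt))].

Definition w_metric B x y : R :=
  enorm (x - y) /
  Num.min (inf [set enorm (x - yt) | yt in refl_set B y])
          (inf [set enorm (y - xt) | xt in refl_set B x]).

(* th (rho_{B^n}(x,y) / 2), given by the standard closed formula *)
Definition th_half_rho x y : R :=
  enorm (x - y) /
  Num.sqrt (enorm (x - y) ^+ 2 + (1 - enorm x ^+ 2) * (1 - enorm y ^+ 2)).

End Defs.

(* Main.v *)
Require Import Defs.
From mathcomp Require Import all_boot all_order all_algebra.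
From mathcomp Require Import boolp classical_sets reals.
From mathcomp.algebra_tactics Require Import ring lra.
Import Order.TTheory GRing.Theory Num.Theory.
Local Open Scope ring_scope.

Section Vec.
Context {R : realType} {n : nat}.
Implicit Types (u v w : 'rV[R]_n).

Definition dot u v : R := \sum_(i < n) u ord0 i * v ord0 i.

Lemma dotC u v : dot u v = dot v u.
Proof. by apply: eq_bigr => i _; rewrite mulrC. Qed.
Lemma dotDl u v w : dot (u + v) w = dot u w + dot v w.
Proof. rewrite /dot -big_split; apply: eq_bigr => i _; rewrite !mxE; exact: mulrDl. Qed.
Lemma dotDr u v w : dot w (u + v) = dot w u + dot w v.
Proof. by rewrite dotC dotDl !(dotC w). Qed.
Lemma dotZl (c : R) u v : dot (c *: u) v = c * dot u v.
Proof. rewrite /dot mulr_sumr; apply: eq_bigr => i _; rewrite !mxE; ring. Qed.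
Lemma dotZr (c : R) u v : dot v (c *: u) = c * dot v u.
Proof. by rewrite dotC dotZl dotC. Qed.
Lemma dotNl u v : dot (- u) v = - dot u v.
Proof. by rewrite -scaleN1r dotZl mulN1r. Qed.
Lemma dotNr u v : dot v (- u) = - dot v u.
Proof. by rewrite dotC dotNl dotC. Qed.
Lemma dotBl u v w : dot (u - v) w = dot u w - dot v w.
Proof. by rewrite dotDl dotNl. Qed.
Lemma dotBr u v w : dot w (u - v) = dot w u - dot w v.
Proof. by rewrite dotDr dotNr. Qed.
Lemma dot0l u : dot 0 u = 0.
Proof. by rewrite -(scale0r 0) dotZl mul0r. Qed.

Lemma dot_ge0 u : 0 <= dot u u.
Proof. by apply: sumr_ge0 => i _; rewrite -expr2 sqr_ge0. Qed.

Lemma enormE u : enorm u = Num.sqrt (dot u u).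
Proof. by rewrite /enorm /dot; congr Num.sqrt; apply: eq_bigr => i _; rewrite expr2. Qed.

Lemma enorm_ge0 u : 0 <= enorm u.
Proof. exact: sqrtr_ge0. Qed.

Lemma enorm_sq u : enorm u ^+ 2 = dot u u.
Proof. by rewrite enormE sqr_sqrtr // dot_ge0. Qed.

Lemma dot_eq0 u : dot u u = 0 -> u = 0.
Proof.
move=> /eqP; rewrite psumr_eq0 => [/allP H|i _]; last by rewrite -expr2 sqr_ge0.
apply/rowP => j; rewrite !mxE.
have := H j (mem_index_enum j); rewrite mulf_eq0 orbb => /eqP ->.
by [].
Qed.

Lemma CS u v : dot u v ^+ 2 <= dot u u * dot v v.
Proof.
have [C0|Cp] := eqVneq (dot v v) 0.
  have v0 := @dot_eq0 v C0; subst v; rewrite dotC !dot0l; lra.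
have H := dot_ge0 ((dot v v) *: u - (dot u v) *: v).
rewrite !(dotBl, dotBr, dotZl, dotZr) (dotC v u) in H.
have Cg : 0 < dot v v by rewrite lt_def Cp dot_ge0.
have : 0 <= dot v v * (dot u u * dot v v - dot u v ^+ 2) by nra.
by rewrite pmulr_rge0 // subr_ge0.
Qed.

Lemma dot_le u v : dot u v <= enorm u * enorm v.
Proof.
rewrite !enormE -sqrtrM ?dot_ge0 //.
apply: (le_trans (ler_norm _)).
rewrite -sqrtr_sqr ler_sqrt; last by rewrite mulr_ge0 ?dot_ge0.
exact: CS.
Qed.


Lemma enorm_sym u v : enorm (u - v) = enorm (v - u).
Proof. by rewrite !enormE -opprB dotNl dotNr opprK. Qed.

Lemma enormZ (c : R) u : enorm (c *: u) = `|c| * enorm u.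
Proof.
rewrite !enormE dotZl dotZr mulrA -expr2 sqrtrM ?sqr_ge0 //.
by rewrite sqrtr_sqr.
Qed.

Lemma enorm_le (r : R) u : 0 <= r -> dot u u <= r ^+ 2 -> enorm u <= r.
Proof.
move=> r0 h; rewrite enormE -(ger0_norm r0) -sqrtr_sqr ler_sqrt //.
exact: sqr_ge0.
Qed.

Lemma le_enorm (r : R) u : 0 <= r -> r ^+ 2 <= dot u u -> r <= enorm u.
Proof.
move=> r0 h; rewrite enormE -(ger0_norm r0) -sqrtr_sqr ler_sqrt //.
exact: dot_ge0.
Qed.

Lemma enorm_eq (r : R) u : 0 <= r -> dot u u = r ^+ 2 -> enorm u = r.
Proof. by move=> r0 h; rewrite enormE h sqrtr_sqr ger0_norm. Qed.

Lemma dotBB u v : dot (u - v) (u - v) = dot u u - 2 * dot u v + dot v v.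
Proof. rewrite !(dotBl, dotBr) (dotC v u); ring. Qed.

Lemma proj v P : enorm v <= 1 -> 1 <= enorm P ->
  enorm (v - (enorm P)^-1 *: P) <= enorm (v - P).
Proof.
move=> hv hP.
have rp : 0 < enorm P by lra.
have k1 : dot v P <= enorm P.
  apply: (le_trans (dot_le v P)).
  by rewrite ger_pMl //.
have hPP : dot P P = enorm P ^+ 2 by rewrite enorm_sq.
set r := enorm P in hP rp k1 hPP *; set k := dot v P in k1 *.
rewrite !enormE ler_sqrt ?dot_ge0 // !dotBB dotZr dotZl dotZr hPP.
have ir : r^-1 * r = 1 by rewrite mulVf // gt_eqF.
have ir0 : 0 < r^-1 by rewrite invr_gt0.
have kr : r^-1 * k <= 1.
  by rewrite mulrC ler_pdivrMr // mul1r.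
have rn : r != 0 by rewrite gt_eqF.
have e1 : r^-1 * (r^-1 * r^+2) = 1 by field.
have e2 : k = (r^-1 * k) * r by field.
rewrite -/k e1.
have : 0 <= (r - 1) * (r + 1 - 2 * (r^-1 * k)) by apply: mulr_ge0; lra.
lra.
Qed.

Lemma enormB_ge u v : enorm u - enorm v <= enorm (u - v).
Proof.
have [h|h] := lerP (enorm u - enorm v) 0; first exact: (le_trans h (enorm_ge0 _)).
apply: le_enorm; first lra.
rewrite dotBB -!enorm_sq.
have := dot_le u v; nra.
Qed.

End Vec.

Section Vec2.
Context {R : realType} {n : nat}.
Implicit Types (u v w m z : 'rV[R]_n).

Lemma cross u v m : enorm u < 1 -> enorm v < 1 -> dot m m = 1 -> u = enorm u *: m ->
  exists z, dot z z = 1 /\ enorm (v - z) + enorm (u - z) <= enorm (v - (2 - enorm u) *: m).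
Proof.
move=> hu hv hm hum.
have em : enorm m = 1 by apply: enorm_eq => //; rewrite hm; ring.
set a := enorm u in hu hum *.
have a0 : 0 <= a by exact: enorm_ge0.
set s := dot v m.
have s1 : s <= enorm v by have := dot_le v m; rewrite em mulr1.
set yp := (2 - a) *: m.
have d0 : 0 < 2 - a - s by lra.
set t0 := (1 - s) / (2 - a - s).
have t00 : 0 <= t0 by apply: divr_ge0; lra.
have t01 : t0 <= 1 by rewrite ler_pdivrMr // mul1r; lra.
set P := v + t0 *: (yp - v).
have Pm : dot P m = 1.
  rewrite /P dotDl dotZl dotBl /yp dotZl hm -/s /t0.
  have dn : 2 - a - s != 0 by rewrite gt_eqF.
  by field.
have rho1 : 1 <= enorm P by have := dot_le P m; rewrite em mulr1 Pm.
exists ((enorm P)^-1 *: P); split.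
  rewrite dotZl dotZr -enorm_sq.
  have : enorm P != 0 by rewrite gt_eqF //; lra.
  by move=> h; field.
have hv1 : enorm v <= 1 by lra.
have hu1 : enorm u <= 1 by rewrite /a in hu; lra.
apply: (le_trans (lerD (proj _ _ hv1 rho1) (proj _ _ hu1 rho1))).
have -> : enorm (u - P) = enorm (yp - P).
  rewrite !enormE; congr Num.sqrt.
  rewrite !dotBB {1 2 3}hum /yp !(dotZl, dotZr) hm (dotC m P) Pm; ring.
have -> : v - P = t0 *: (v - yp).
  by rewrite /P opprD addrA subrr add0r -scalerN opprB.
have -> : yp - P = (1 - t0) *: (yp - v).
  by rewrite /P opprD addrA scalerBl scale1r.
rewrite !enormZ (enorm_sym yp) !ger0_norm; last 2 first.
- lra.
- lra.
have := enorm_ge0 (v - yp); nra.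
Qed.

End Vec2.

Section Vec3.
Context {R : realType} {n : nat}.
Implicit Types (u v w m z : 'rV[R]_n).

Lemma sqrt_le_of (x y : R) : 0 <= y -> x <= y ^+ 2 -> Num.sqrt x <= y.
Proof. by move=> y0 h; rewrite -(ger0_norm y0) -sqrtr_sqr ler_sqrt // sqr_ge0. Qed.

Lemma L1 u v z : dot z z = 1 ->
  Num.sqrt (enorm (u - v) ^+ 2 + (1 - enorm u ^+ 2) * (1 - enorm v ^+ 2))
  <= enorm v * enorm (u - z) + enorm (v - z).
Proof.
move=> hz.
have b0 := enorm_ge0 v; have p0 := enorm_ge0 (u - z); have q0 := enorm_ge0 (v - z).
have hb := enorm_sq v; have hp := enorm_sq (u - z); have hq := enorm_sq (v - z).
have hd := enorm_sq (u - v); have ha := enorm_sq u.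
rewrite dotBB hz in hp; rewrite dotBB hz in hq; rewrite dotBB in hd.
set b := enorm v in b0 hb *; set p := enorm (u - z) in p0 hp *; set q := enorm (v - z) in q0 hq *.
have eV : enorm (b^+2 *: z - v) = b * q.
  apply: enorm_eq; first exact: mulr_ge0.
  rewrite dotBB !(dotZl, dotZr) hz exprMn hq -hb (dotC z v); ring.
have D := dot_le (u - z) (b^+2 *: z - v).
rewrite eV !(dotBl, dotBr, dotZr) hz (dotC z v) in D.
rewrite hd ha hb.
apply: sqrt_le_of; first by apply: addr_ge0 => //; exact: mulr_ge0.
have e : (b * p + q) ^+ 2 = b^+2 * p^+2 + 2 * (p * (b * q)) + q^+2 by ring.
rewrite e hp hq.
have e2 : b^+2 * (dot u u - 2 * dot u z + 1) = b^+2 * dot u u - 2 * (b^+2 * dot u z) + b^+2 by ring.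
rewrite e2.
rewrite -/p in D; rewrite -hb; lra.
Qed.

End Vec3.

Section P.
Variable R : realFieldType.
Implicit Types r a b t : R.
Definition Gf a b t := 4 * (1 - 2*b*t + a^+2*b^+2) - (1+a)^+2*(1-b)*(a^+2*(1+b)+3-b-4*t).

Lemma Gm a b : 0 <= a -> a <= b -> b < 1 -> 0 <= Gf a b (-a).
Proof.
move=> a0 ab b1.
have E : Gf a b (-a) = (a^+3+a^+2+3*a-1)^+2 + (b - a) * ((4*a^+2 - (1+a)^+3*(1-a))*(b+a) + 8*a + 4*(1+a)^+3).
  rewrite /Gf; ring.
rewrite E; apply: addr_ge0; first exact: sqr_ge0.
apply: mulr_ge0; first lra.
have h1 : 0 <= (1+a)^+3 by apply: exprn_ge0; lra.
have h2 : (1-a)*(b+a) <= 2 by nra.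
have h3 : 0 <= 4*a^+2 by nra.
nra.
Qed.

Lemma Gp a b : 0 <= a -> a <= b -> b < 1 -> 0 <= Gf a b a.
Proof.
move=> a0 ab b1.
have E : Gf a b a = 4*((1-a)+(1-b)-2*(1-a)*(1-b))^+2 + (1-a)^+3*(1-b)*(8-6*(1-b)-2*(1-a)+(1-a)*(1-b)).
  rewrite /Gf; ring.
rewrite E; apply: addr_ge0; first by apply: mulr_ge0; [lra|exact: sqr_ge0].
apply: mulr_ge0; last nra.
apply: mulr_ge0; last lra.
apply: exprn_ge0; lra.
Qed.

Lemma Gt a b t : 0 <= a -> a <= b -> b < 1 -> -a <= t -> t <= a -> 0 <= Gf a b t.
Proof.
move=> a0 ab b1 t1 t2.
have L1 : Gf a b t = Gf a b (-a) + (t + a) * (-8*b + 4*(1+a)^+2*(1-b)) by rewrite /Gf; ring.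
have L2 : Gf a b t = Gf a b a + (t - a) * (-8*b + 4*(1+a)^+2*(1-b)) by rewrite /Gf; ring.
have := @Gm a b a0 ab b1; have := @Gp a b a0 ab b1.
have [g|g] := lerP 0 (-8*b + 4*(1+a)^+2*(1-b)); nra.
Qed.

Lemma poly1 r a b t : 0 <= r -> r <= a -> a <= b -> b < 1 -> -a <= t -> t <= a ->
 (1+r)^+2 * (a^+2 - 2*(2-b)*t + (2-b)^+2) <= (5+2*r+r^+2) * (a^+2 - 2*b*t + b^+2 + (1-a^+2)*(1-b^+2)).
Proof.
move=> r0 ra ab b1 t1 t2.
have G := @Gt a b t (le_trans r0 ra) ab b1 t1 t2.
have E : (5+2*r+r^+2) * (a^+2 - 2*b*t + b^+2 + (1-a^+2)*(1-b^+2)) - (1+r)^+2 * (a^+2 - 2*(2-b)*t + (2-b)^+2)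
   = 4 * (1 - 2*b*t + a^+2*b^+2) - (1+r)^+2*(1-b)*(a^+2*(1+b)+3-b-4*t) by ring.
rewrite -subr_ge0 E.
have A0 : 0 <= 1 - 2*b*t + a^+2*b^+2.
  have bt : b*t <= b*a by apply: ler_wpM2l => //; lra.
  have := sqr_ge0 (1 - a*b); nra.
have K : (1+r)^+2 <= (1+a)^+2 by nra.
have [e|e] := lerP 0 (a^+2*(1+b)+3-b-4*t).
  have : (1+r)^+2*((1-b)*(a^+2*(1+b)+3-b-4*t)) <= (1+a)^+2*((1-b)*(a^+2*(1+b)+3-b-4*t)).
    by apply: ler_wpM2r => //; apply: mulr_ge0 => //; lra.
  move: G; rewrite /Gf; nra.
have : (1+r)^+2*((1-b)*(a^+2*(1+b)+3-b-4*t)) <= 0.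
  apply: mulr_ge0_le0; first exact: sqr_ge0.
  by apply: mulr_ge0_le0; lra.
nra.
Qed.
End P.


Section Geo.
Context {R : realType} {n : nat}.
Implicit Types (x y u v w m z : 'rV[R]_n).
Local Open Scope classical_set_scope.

Lemma div_anti (d p q : R) : 0 <= d -> 0 < p -> p <= q -> d / q <= d / p.
Proof.
move=> d0 p0 pq; apply: ler_wpM2l => //.
rewrite lef_pV2 ?posrE //; lra.
Qed.

Lemma sphereP z : unit_sphere z <-> dot z z = 1.
Proof.
rewrite /unit_sphere /esphere /= subr0; split.
  by move=> h; rewrite -enorm_sq h expr1n.
by move=> h; apply: enorm_eq => //; rewrite h expr1n.
Qed.

Lemma enorm0 : enorm (0 : 'rV[R]_n) = 0.
Proof. by rewrite enormE dot0l sqrtr0. Qed.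

Lemma enorm_eq0 u : enorm u = 0 -> u = 0.
Proof. by move=> h; apply: dot_eq0; rewrite -enorm_sq h expr0n. Qed.

Lemma exists_unit : (0 < n)%N -> exists z : 'rV[R]_n, dot z z = 1.
Proof.
move=> n0.
have np : (0 : R) < n%:R by rewrite ltr0n.
exists (const_mx (Num.sqrt (n%:R))^-1).
rewrite /dot.
under eq_bigr do rewrite !mxE.
rewrite sumr_const card_ord -mulr_natl -expr2 exprVn sqr_sqrtr; last by lra.
have nn : (n%:R : R) != 0 by rewrite gt_eqF.
rewrite mulr1 -mulr_natl; by field.
Qed.

Lemma near_pt x : (0 < n)%N -> enorm x < 1 ->
  exists m, dot m m = 1 /\ x = enorm x *: m.
Proof.
move=> n0 hx.
have [->|xn0] := eqVneq x 0.
  by have [z hz] := exists_unit n0; exists z; rewrite enorm0 scale0r.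
have a0 : enorm x != 0 by apply/eqP => /enorm_eq0; apply/eqP.
exists ((enorm x)^-1 *: x); split.
  by rewrite dotZl dotZr -enorm_sq; field.
by rewrite scalerA mulfV // scale1r.
Qed.

Lemma dist_unit x : (0 < n)%N -> enorm x < 1 ->
  dist_bd (@unit_sphere R n) x = 1 - enorm x.
Proof.
move=> n0 hx.
have [m [hm hxm]] := near_pt _ n0 hx.
have mS : unit_sphere m by apply/sphereP.
have ex : enorm (x - m) = 1 - enorm x.
  apply: enorm_eq; first by have := enorm_ge0 x; lra.
  rewrite dotBB {1 2 3}hxm !(dotZl, dotZr) hm; ring.
apply/eqP; rewrite eq_le; apply/andP; split.
  apply: ge_inf; last by exists m.
  by exists 0 => _ [z _ <-]; exact: enorm_ge0.
apply: lb_le_inf; first by exists (enorm (x - m)), m.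
move=> _ [z /sphereP hz <-].
rewrite enorm_sym; apply: le_trans (enormB_ge z x).
have : enorm z = 1 by apply: enorm_eq => //; rewrite hz expr1n.
by move=> ->.
Qed.


Lemma refl_rep y yt : (0 < n)%N -> enorm y < 1 ->
  refl_set (@unit_sphere R n) y yt ->
  exists m, dot m m = 1 /\ y = enorm y *: m /\ yt = (2 - enorm y) *: m.
Proof.
move=> n0 hy [hs hm].
rewrite /esphere /= dist_unit // in hs.
set m := 2^-1 *: (y + yt) in hm.
move/sphereP: hm => hm.
have h2 : (2 : R) != 0 by rewrite pnatr_eq0.
have eyt : yt = 2 *: m - y.
  by rewrite /m scalerA mulfV // scale1r addrC addKr.
clearbody m.
have emy : enorm (m - y) = 1 - enorm y.
  have : yt - y = 2 *: (m - y).
    by rewrite eyt scalerBr -addrA -opprD !scaler_nat !mulr2n.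
  move=> e; rewrite e enormZ ger0_norm // in hs; lra.
have hb := enorm_sq y.
have emy2 := enorm_sq (m - y).
rewrite emy dotBB hm in emy2.
have ey : y = enorm y *: m.
  apply/esym/eqP; rewrite -subr_eq0; apply/eqP/dot_eq0.
  rewrite dotBB !(dotZl, dotZr) hm -hb.
  move: emy2; rewrite -hb; set b := enorm y; set c := dot m y; move=> e; nra.
exists m; split => //; split => //.
by rewrite eyt {1}ey scalerBl.
Qed.

Lemma refl_mem y : (0 < n)%N -> enorm y < 1 ->
  exists m, dot m m = 1 /\ y = enorm y *: m /\
     refl_set (@unit_sphere R n) y ((2 - enorm y) *: m).
Proof.
move=> n0 hy.
have [m [hm ey]] := near_pt _ n0 hy.
have em : enorm m = 1 by apply: enorm_eq => //; rewrite hm expr1n.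
exists m; split => //; split => //; split.
  rewrite /esphere /= dist_unit // {2}ey -scalerBl enormZ em mulr1 ger0_norm.
    ring.
  have := enorm_ge0 y; lra.
have -> : 2^-1 *: (y + (2 - enorm y) *: m) = m.
  by rewrite {1}ey -scalerDl addrC subrK scalerA mulVf ?pnatr_eq0 // scale1r.
by apply/sphereP.
Qed.

Lemma ge_inf_nonneg (E : set R) e : (forall r, E r -> 0 <= r) -> E e -> inf E <= e.
Proof. by move=> h He; apply: ge_inf => //; exists 0 => r /h. Qed.

End Geo.

Theorem corollary3p8 (R : realType) (n : nat) (rl ru : R) :
  (2 <= n)%N -> 0 <= rl -> rl <= ru -> ru < 1 ->
  forall x y : 'rV[R]_n,
    unit_ball x -> unit_ball y ->
    rl <= enorm x -> enorm x <= enorm y -> enorm y <= ru ->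
    (1 + rl) / Num.sqrt (5 + 2 * rl + rl ^+ 2) * th_half_rho x y
      <= w_metric (@unit_sphere R n) x y
    /\ w_metric (@unit_sphere R n) x y <= s_metric (@unit_sphere R n) x y
    /\ s_metric (@unit_sphere R n) x y
      <= (1 + ru ^+ 2) / (2 * Num.sqrt (1 - 2 * ru + 2 * ru ^+ 2)) * th_half_rho x y.
Proof.
move=> n2 rl0 rlu ru1 x y hx hy hrx hxy hyr.
have n0 : (0 < n)%N by apply: leq_trans n2.
have {}hx : enorm x < 1 := hx.
have {}hy : enorm y < 1 := hy.
rewrite /w_metric /s_metric /th_half_rho.
set S := @unit_sphere R n.
set Is := inf [set enorm (x - z) + enorm (z - y) | z in S].
set I1 := inf [set enorm (x - yt) | yt in refl_set S y].
set I2 := inf [set enorm (y - xt) | xt in refl_set S x].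
have a0 := enorm_ge0 x.
have [exy|nxy] := eqVneq x y.
  rewrite exy subrr enorm0 !mul0r mulr0; lra.
have d0 : 0 < enorm (x - y).
  rewrite lt_def enorm_ge0 andbT; apply/eqP => /enorm_eq0 /eqP.
  by rewrite subr_eq0 (negbTE nxy).
set d := enorm (x - y) in d0 *.
set a := enorm x in hx hrx hxy a0 *.
set b := enorm y in hxy hyr hy *.
set A := Num.sqrt (d ^+ 2 + _).
have dA : d <= A.
  rewrite /A -{1}(ger0_norm (ltW d0)) -sqrtr_sqr ler_sqrt; last first.
    apply: addr_ge0; first exact: sqr_ge0.
    apply: mulr_ge0; nra.
  have : 0 <= (1 - a ^+ 2) * (1 - b ^+ 2) by apply: mulr_ge0; nra.
  lra.
have A0 : 0 < A by lra.
have Isl : 2 * A / (1 + b) <= Is.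
  apply: lb_le_inf.
    have [z hz] := exists_unit (R:=R) n0.
    exists (enorm (x - z) + enorm (z - y)); exists z => //; exact/sphereP.
  move=> _ [z /sphereP hz <-].
  have h1 := L1 x y z hz.
  have h2 := L1 y x z hz.
  rewrite (enorm_sym y x) -/d -/a -/b [(1 - b^+2) * _]mulrC -/A in h2.
  rewrite -/d -/a -/b -/A in h1.
  rewrite (enorm_sym z y).
  have p0 := enorm_ge0 (x - z); have q0 := enorm_ge0 (y - z).
  rewrite ler_pdivrMr; last lra.
  nra.
have Isp : 0 < Is.
  apply: lt_le_trans Isl; apply: divr_gt0; lra.
have IsS : forall z, S z -> Is <= enorm (x - z) + enorm (y - z).
  move=> z hz; rewrite (enorm_sym y z); apply: ge_inf_nonneg; last by exists z.
  by move=> _ [w _ <-]; apply: addr_ge0; exact: enorm_ge0.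
have IsI1 : Is <= I1.
  have [m [hm [ey hr]]] := refl_mem _ n0 hy.
  apply: lb_le_inf; first by exists (enorm (x - (2 - b) *: m)), ((2 - b) *: m).
  move=> _ [yt hyt <-].
  have [m' [hm' [ey' eyt]]] := refl_rep _ _ n0 hy hyt.
  have [z [hz hz2]] := cross _ x _ hy hx hm' ey'.
  rewrite -eyt in hz2.
  apply: le_trans (IsS z _) _; first by apply/sphereP.
  exact: hz2.
have IsI2 : Is <= I2.
  have [m [hm [ex hr]]] := refl_mem _ n0 hx.
  apply: lb_le_inf; first by exists (enorm (y - (2 - a) *: m)), ((2 - a) *: m).
  move=> _ [xt hxt <-].
  have [m' [hm' [ex' ext]]] := refl_rep _ _ n0 hx hxt.
  have [z [hz hz2]] := cross _ y _ hx hy hm' ex'.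
  rewrite -ext in hz2.
  apply: le_trans (IsS z _) _; first exact/sphereP.
  by rewrite addrC.
have [m [hm [ey hr]]] := refl_mem _ n0 hy.
set L := enorm (x - (2 - b) *: m).
have I1L : I1 <= L.
  apply: ge_inf_nonneg; last by exists ((2 - b) *: m).
  by move=> _ [w _ <-]; exact: enorm_ge0.
set M := Num.min I1 I2.
have IsM : Is <= M by rewrite le_min IsI1 IsI2.
have ML : M <= L by rewrite ge_min I1L.
have Mp : 0 < M by apply: lt_le_trans Isp IsM.
split; last split.
- have Lp : 0 < L by apply: lt_le_trans Mp ML.
  set sQ := Num.sqrt (5 + 2 * rl + rl ^+ 2).
  have sQp : 0 < sQ by rewrite sqrtr_gt0; nra.
  have key : (1 + rl) * L <= sQ * A.
    set t := dot x m.
    have hL2 : L ^+ 2 = a ^+ 2 - 2 * (2 - b) * t + (2 - b) ^+ 2.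
      by rewrite /L enorm_sq dotBB !(dotZr, dotZl) hm -enorm_sq -/a -/t; ring.
    have dxy : dot x y = b * t by rewrite {1}ey dotZr.
    have hd2 : d ^+ 2 = a ^+ 2 - 2 * b * t + b ^+ 2.
      by rewrite /d enorm_sq dotBB dxy -!enorm_sq -/a -/b; ring.
    have ht := CS x m; rewrite hm -/t -enorm_sq -/a in ht.
    have t1 : - a <= t by nra.
    have t2 : t <= a by nra.
    have P1 := @poly1 _ rl a b t rl0 hrx hxy hy t1 t2.
    rewrite /sQ /A -sqrtrM; last nra.
    rewrite -(ger0_norm (_ : 0 <= (1 + rl) * L)); last by apply: mulr_ge0; lra.
    rewrite -sqrtr_sqr ler_sqrt; last first.
      apply: mulr_ge0; first nra.
      apply: addr_ge0; first exact: sqr_ge0.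
      apply: mulr_ge0; nra.
    rewrite exprMn hL2 hd2; lra.
  apply: (le_trans _ (div_anti _ _ _ (ltW d0) Mp ML)).
  rewrite ler_pdivlMr //.
  have An : A != 0 by rewrite gt_eqF.
  have sQn : sQ != 0 by rewrite gt_eqF.
  have -> : (1 + rl) / sQ * (d / A) * L = (d / (sQ * A)) * ((1 + rl) * L) by rewrite invfM; ring.
  have dp : 0 <= d / (sQ * A) by apply: divr_ge0; [lra | apply: mulr_ge0; lra].
  apply: le_trans (ler_wpM2l dp key) _.
  have -> : d / (sQ * A) * (sQ * A) = d by rewrite mulfVK // mulf_neq0.
  exact: lexx.
- exact: div_anti _ _ _ (ltW d0) Isp IsM.
- have B0p : 0 < 2 * A / (1 + b) by apply: divr_gt0; lra.
  apply: le_trans (div_anti _ _ _ (ltW d0) B0p Isl) _.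
  set sQ := Num.sqrt (1 - 2 * ru + 2 * ru ^+ 2).
  have Qp : 0 < 1 - 2 * ru + 2 * ru ^+ 2 by nra.
  have sQp : 0 < sQ by rewrite sqrtr_gt0.
  have hb2 : (1 + b) * sQ <= 1 + ru ^+ 2.
    rewrite /sQ -(ger0_norm (_ : 0 <= 1 + b)); last lra.
    rewrite -sqrtr_sqr -sqrtrM ?sqr_ge0 //.
    rewrite -(ger0_norm (_ : 0 <= 1 + ru ^+ 2)); last nra.
    rewrite -[X in _ <= X]sqrtr_sqr ler_sqrt; last exact: sqr_ge0.
    have h1 : (1 + b) ^+ 2 <= (1 + ru) ^+ 2 by nra.
    have h2 : (1 + b) ^+ 2 * (1 - 2 * ru + 2 * ru ^+ 2) <= (1 + ru) ^+ 2 * (1 - 2 * ru + 2 * ru ^+ 2).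
      by apply: ler_wpM2r => //; lra.
    have h3 : (1 + ru ^+ 2) ^+ 2 - (1 + ru) ^+ 2 * (1 - 2 * ru + 2 * ru ^+ 2) = ru ^+ 2 * ((1 - ru) * (3 + ru)) by ring.
    have h4 : 0 <= ru ^+ 2 * ((1 - ru) * (3 + ru)) by apply: mulr_ge0; [exact: sqr_ge0 | apply: mulr_ge0; lra].
    lra.
  have An : A != 0 by rewrite gt_eqF.
  have bn : 1 + b != 0 by rewrite gt_eqF //; lra.
  have sQn : sQ != 0 by rewrite gt_eqF.
  have -> : d / (2 * A / (1 + b)) = (d / A) * ((1 + b) / 2) by field; rewrite An bn.
  rewrite [X in _ <= X]mulrC.
  have dp : 0 <= d / A by apply: divr_ge0; lra.
  rewrite ler_pM2l; last by apply: divr_gt0.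
  rewrite ler_pdivlMr; last by apply: mulr_gt0.
  have -> : (1 + b) / 2 * (2 * sQ) = (1 + b) * sQ by field.
  exact: hb2.
Qed.
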